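(* Let $\mathbb{F}\subset\mathbb{K}$ be fields of characteristic zero and let $a\colon\mathbb{F}\to\mathbb{K}$ be an additive mapping such that \[ 2a(x^{6})-9x^{2}a(x^{4})-4x^{3}a(x^{3})+36x^{4}a(x^{2})-36x^{5}a(x)=0\qquad(x\in\mathbb{F}). \] Then $a$ is a derivation of order $3$.
   Context: Derivations of higher order: the identically zero map is the only derivation of order $0$; for $m\ge1$, an additive map $d\colon\mathbb{F}\to\mathbb{K}$ is a derivation of order $m$ if there is a map $B\colon\mathbb{F}\times\mathbb{F}\to\mathbb{K}$ which is a derivation of order $m-1$ in each variable such that $d(xy)-xd(y)-d(x)y=B(x,y)$ for all $x,y\in\mathbb{F}$. *)

(* Defs.v *)
From mathcomp Require Import all_boot all_algebra.
Set Implicit Arguments. Unset Strict Implicit. Unset Printing Implicit Defensive.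
Import GRing.Theory.
Local Open Scope ring_scope.

(* The inclusion F ⊂ K is represented by a ring morphism iota : F -> K
   (automatically injective, F a field). *)

Definition additive_map (F K : fieldType) (d : F -> K) : Prop :=
  forall x y, d (x + y) = d x + d y.

Fixpoint derivation_of_order (F K : fieldType) (iota : {rmorphism F -> K})
    (m : nat) (d : F -> K) {struct m} : Prop :=
  match m with
  | 0%N => forall x, d x = 0
  | m'.+1 =>
      additive_map d /\
      exists B : F -> F -> K,
        (forall y, derivation_of_order iota m' (fun x => B x y)) /\
        (forall x, derivation_of_order iota m' (B x)) /\
        (forall x y, d (x * y) - iota x * d y - d x * iota y = B x y)
  end.

(* Main.v *)
Require Import Defs.
From mathcomp Require Import all_boot all_algebra.
From mathcomp Require Import ring.
Import GRing.Theory.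
Local Open Scope ring_scope.

Section S.
Variables (F K : fieldType) (io : {rmorphism F -> K}).
Variable a : F -> K.
Hypothesis a_add : additive_map a.
Hypothesis charK : [pchar K] =i pred0.

Lemma a0 : a 0 = 0.
Proof. have := a_add 0 0; rewrite addr0 => H; apply: (addrI (a 0)); by rewrite -H addr0. Qed.

Lemma a_nat (z : F) n : a (n%:R * z) = n%:R * a z.
Proof.
elim: n => [|n IH]; first by rewrite !mul0r a0.
by rewrite -[n.+1]addn1 !natrD !mulrDl a_add IH !mul1r.
Qed.

Definition polyT (h : nat -> K) (c0 c1 : K) :=
  exists p : {poly K}, (forall t, h t = p.[t%:R]) /\ p`_0 = c0 /\ p`_1 = c1.

Lemma polyT_const c : polyT (fun _ => c) c 0.
Proof. exists c%:P; split; first by move=> t; rewrite hornerC. by rewrite !coefC. Qed.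

Lemma polyT_t : polyT (fun t => t%:R) 0 1.
Proof. exists 'X; split; first by move=> t; rewrite hornerX. by rewrite !coefX. Qed.

Lemma polyT_add h1 h2 a0' a1 b0 b1 : polyT h1 a0' a1 -> polyT h2 b0 b1 ->
  polyT (fun t => h1 t + h2 t) (a0' + b0) (a1 + b1).
Proof.
move=> [p [Hp [p0 p1]]] [q [Hq [q0 q1]]]; exists (p + q); split.
  by move=> t; rewrite hornerD Hp Hq.
by rewrite !coefD p0 p1 q0 q1.
Qed.

Lemma polyT_mul h1 h2 a0' a1 b0 b1 : polyT h1 a0' a1 -> polyT h2 b0 b1 ->
  polyT (fun t => h1 t * h2 t) (a0' * b0) (a0' * b1 + a1 * b0).
Proof.
move=> [p [Hp [p0 p1]]] [q [Hq [q0 q1]]]; exists (p * q); split.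
  by move=> t; rewrite hornerM Hp Hq.
rewrite !coefM !big_ord_recr !big_ord0 /= !add0r p0 p1 q0 q1 /=.
by rewrite addrC.
Qed.

Lemma polyT_eq h h' c0 c1 c0' c1' : polyT h c0 c1 -> (forall t, h' t = h t) ->
  c0 = c0' -> c1 = c1' -> polyT h' c0' c1'.
Proof. move=> [p [Hp [p0 p1]]] E <- <-; exists p; split=> // t; by rewrite E. Qed.

Lemma polyT_zero h c0 c1 : polyT h c0 c1 -> (forall t, h t = 0) -> c1 = 0.
Proof.
move=> [p [Hp [_ <-]]] H0.
case: (eqVneq p 0) => [->|pn0]; first by rewrite coef0.
exfalso.
have := @max_poly_roots _ p [seq i%:R | i <- iota 0 (size p)] pn0.
rewrite size_map size_iota ltnn => H; suff : false by []; apply: H.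
  by apply/allP => _ /mapP [i _ ->]; rewrite /root -Hp H0.
rewrite map_inj_uniq ?iota_uniq // => i j /eqP.
have /pcharf0P ch0 : has_pchar0 K by [].
move=> E; apply/eqP; rewrite eqn_leq; apply/andP; split; rewrite leqNgt; apply/negP=> lt.
  have : (i - j)%:R == 0 :> K by rewrite (natrB _ (ltnW lt)) subr_eq0.
  by rewrite ch0 subn_eq0 leqNgt lt.
have : (j - i)%:R == 0 :> K by rewrite (natrB _ (ltnW lt)) subr_eq0 eq_sym.
by rewrite ch0 subn_eq0 leqNgt lt.
Qed.

Arguments polyT_eq {h h' c0 c1 c0' c1'}.
Arguments polyT_add {h1 h2 a0' a1 b0 b1}.
Arguments polyT_mul {h1 h2 a0' a1 b0 b1}.
Arguments polyT_zero {h c0 c1}.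
Lemma polyT_io x y m : polyT (fun t => io (x + t%:R*y) ^+ m) (io x ^+ m) (m%:R * io x ^+ m.-1 * io y).
Proof.
have L1 : polyT (fun t => io (x + t%:R*y)) (io x) (io y).
  apply: polyT_eq (polyT_add (polyT_const (io x)) (polyT_mul polyT_t (polyT_const (io y)))) _ _ _.
  - by move=> t; rewrite rmorphD rmorphM rmorph_nat.
  - by rewrite !(mul0r, mulr0, add0r, addr0, mul1r).
  - by rewrite !(mul0r, mulr0, add0r, addr0, mul1r).
elim: m => [|m IH].
  apply: polyT_eq (polyT_const 1) _ _ _.
  - by move=> t; rewrite expr0.
  - by rewrite expr0.
  - by rewrite !mul0r.
apply: polyT_eq (polyT_mul IH L1) _ _ _.
- by move=> t; rewrite exprS mulrC.
- by rewrite exprS mulrC.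
case: m {IH} => [|m] /=; first by ring.
rewrite -[m.+2]addn1 natrD exprS; ring.
Qed.

Lemma polyT_a x y k : forall w, polyT (fun t => a ((x + t%:R*y)^+k * w)) (a (x^+k*w)) (k%:R * a (x^+k.-1 * (y*w))).
Proof.
elim: k => [|k IH] w.
  apply: polyT_eq (polyT_const (a (1 * w))) _ _ _.
  - by move=> t; rewrite expr0.
  - by rewrite expr0.
  - by rewrite !mul0r.
apply: polyT_eq (polyT_add (IH (x * w)) (polyT_mul polyT_t (IH (y * w)))) _ _ _.
- move=> t; rewrite exprSr -mulrA mulrDl mulrDr a_add; congr (_ + _).
  by rewrite -a_nat; congr (a _); ring.
- by rewrite mul0r addr0 exprSr -mulrA.
rewrite mul0r add0r mul1r.
case: k {IH} => [|k] /=; first by ring.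
rewrite -[k.+2]addn1 natrD mulrDl mul1r; congr (_ + _).
by congr (_ * a _); rewrite exprS; ring.
Qed.

Definition evalT (x : F) (T : K * nat * nat * F) :=
  let: (c, m, k, w) := T in c * io x ^+ m * a (x ^+ k * w).
Definition evalL x (L : seq (K * nat * nat * F)) := foldr (fun T acc => evalT x T + acc) 0 L.
Definition derivT (y : F) (T : K * nat * nat * F) :=
  let: (c, m, k, w) := T in [:: (c * m%:R * io y, m.-1, k, w); (c * k%:R, m, k.-1, y * w)].
Definition derivL y L := foldr (fun T acc => derivT y T ++ acc) [::] L.

Lemma evalL_cat x L1 L2 : evalL x (L1 ++ L2) = evalL x L1 + evalL x L2.
Proof. by elim: L1 => [|T L IH] /=; rewrite ?add0r // IH addrA. Qed.

Lemma polyT_L x y L : polyT (fun t => evalL (x + t%:R * y) L) (evalL x L) (evalL x (derivL y L)).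
Proof.
elim: L => [|[[[c m] k] w] L IH] /=; first exact: polyT_const.
rewrite ?evalL_cat.
apply: polyT_eq (polyT_add (polyT_mul (polyT_mul (polyT_const c) (polyT_io x y m)) (polyT_a x y k w)) IH) _ _ _ => //=.
ring.
Qed.

Lemma deriv_zero L y : (forall x, evalL x L = 0) -> forall x, evalL x (derivL y L) = 0.
Proof. move=> H x; apply: (polyT_zero (polyT_L x y L)) => t; exact: H. Qed.


Arguments deriv_zero {L} y.
Definition Leib (h : F -> K) x y := h (x * y) - io x * h y - h x * io y.

Lemma Leib_sym h x y : Leib h x y = Leib h y x.
Proof. rewrite /Leib mulrC; ring. Qed.

Lemma Leib_add h y : additive_map h -> additive_map (fun x => Leib h x y).
Proof. move=> hA x z; rewrite /Leib mulrDl !hA rmorphD; ring. Qed.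

Lemma order_ext m : forall h h', h =1 h' -> derivation_of_order io m h -> derivation_of_order io m h'.
Proof.
case: m => [|m] h h' E /=; first by move=> H x; rewrite -E.
move=> [hA [B [B1 [B2 B3]]]]; split.
  by move=> x y; rewrite -!E.
by exists B; split => //; split => // x y; rewrite -!E.
Qed.

Arguments order_ext {m h h'}.
Lemma ord_succ m h : additive_map h -> (forall y, derivation_of_order io m (fun x => Leib h x y)) ->
  (forall x, derivation_of_order io m (Leib h x)) -> derivation_of_order io m.+1 h.
Proof. by move=> hA H1 H2; split => //; exists (Leib h). Qed.

Lemma order3_of_E : (forall x y z w, Leib (fun u => Leib (fun v => Leib a v y) u z) x w = 0) ->
  derivation_of_order io 3 a.
Proof.
move=> E.
have P1 : forall y z, derivation_of_order io 1 (fun x => Leib (fun v => Leib a v y) x z).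
  move=> y z; apply: ord_succ.
  - by apply: Leib_add; apply: Leib_add.
  - by move=> w x /=; apply: E.
  - by move=> x w /=; apply: E.
have P2 : forall y, derivation_of_order io 2 (fun x => Leib a x y).
  move=> y; apply: ord_succ.
  - by apply: Leib_add.
  - by move=> z; apply: P1.
  - by move=> x; apply: (order_ext _ (P1 y x)) => z; rewrite Leib_sym.
apply: ord_succ => //.
by move=> x; apply: (order_ext _ (P2 x)) => z; rewrite Leib_sym.
Qed.


Definition L0 : seq (K * nat * nat * F) :=
  [:: (2, 0%N, 6%N, 1); (-9, 2%N, 4%N, 1); (-4, 3%N, 3%N, 1); (36, 4%N, 2%N, 1); (-36, 5%N, 1%N, 1)].

Lemma E_zero : (forall x, evalL x L0 = 0) -> a 1 = 0 ->
  forall x y z w, Leib (fun u => Leib (fun v => Leib a v y) u z) x w = 0.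
Proof.
move=> HL0 a1 x y z w.
have H4 := deriv_zero x (deriv_zero w (deriv_zero z (deriv_zero y HL0))) 1.
rewrite /evalL /derivL /= in H4.
rewrite !expr1n !mul1r !mulr1 !rmorph1 !expr1n !mulr1 a1 in H4.
have /pcharf0P ch0 : has_pchar0 K by [].
have nz : (504%:R : K) != 0 by rewrite ch0.
apply: (mulfI nz); rewrite mulr0 -[X in _ = X]H4.
rewrite /Leib !rmorphM -!mulrA ?a1.
ring.
Qed.

End S.

Theorem mainTheorem3 (F K : fieldType) (iota : {rmorphism F -> K})
  (charF : [pchar F] =i pred0) (charK : [pchar K] =i pred0)
  (a : F -> K) (a_add : additive_map a)
  (Heq : forall x : F,
     2 * a (x ^+ 6) - 9 * iota (x ^+ 2) * a (x ^+ 4)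
     - 4 * iota (x ^+ 3) * a (x ^+ 3) + 36 * iota (x ^+ 4) * a (x ^+ 2)
     - 36 * iota (x ^+ 5) * a x = 0) :
  derivation_of_order iota 3 a.
Proof.
have HL0 : forall x, @evalL F K iota a x (@L0 F K) = 0.
  move=> x; rewrite -(Heq x) /evalL /= !mulr1 !rmorphXn; ring.
have a1 : a 1 = 0.
  have H := Heq 1; rewrite !expr1n !rmorph1 in H.
  have : (-11) * a 1 = 0 by rewrite -H; ring.
  have /pcharf0P ch0 : has_pchar0 K by [].
  move/eqP; rewrite mulf_eq0 oppr_eq0 ch0 /= => /eqP //.
apply: order3_of_E => //.
exact: E_zero.
Qed.
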